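(* Let $u=u_1\ldots u_n\in\mathbb{P}^*$ have an increasing/decreasing factorization, and fix $1\le i\le n-1$. Let $\mathcal{S}^{(i)}(u)$ be the set of words $w=w_1\ldots w_m\in\mathbb{P}^*$ such that (i) $u$ embeds into the suffix $w_{m-n+1}\ldots w_m$ (i.e. $u\le w_{m-n+1}\ldots w_m$ letterwise), and (ii) the leftmost embedding of $u$ into $w$ occupies positions $m-2n+i+1,\ldots,m-n+i$ (so it overlaps the final $n$ positions in exactly $i$ positions). Let $S^{(i)}(u;t,x)=\sum_{w\in\mathcal{S}^{(i)}(u)}t^{|w|}x^{\Sigma(w)}$. Then, with $s_i=u_{i+1}\ldots u_n$, $$S^{(i)}(u;t,x)=S(u;t,x)\,t^{n-i}x^{d_i(u)+\Sigma(s_i)}\left(\frac{1}{1-x}\right)^{n-i}.$$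
   Context: $\mathbb{P}$ is the set of positive integers with the usual order, $\mathbb{P}^*$ the finite words over $\mathbb{P}$. For $w=w_1\ldots w_n$, $|w|=n$, $\Sigma(w)=\sum w_i$, $\mathrm{wt}(w)=t^{|w|}x^{\Sigma(w)}$. For words $u,w$, an embedding of $u$ into $w$ is a string $v$ of $|u|$ consecutive letters of $w$ whose $i$-th letter is $\ge$ the $i$-th letter of $u$ for every $i$; $u\le w$ means such an embedding exists. $\mathcal{S}(u)$ is the set of words $w$ with $u\le w$ such that the last $|u|$ letters of $w$ form the only embedding of $u$ into $w$, and $S(u;t,x)=\sum_{w\in\mathcal{S}(u)}\mathrm{wt}(w)$. $u=u_1\ldots u_n$ has an increasing/decreasing factorization if $u_1\le\cdots\le u_n$ or there is $k<n$ with $u_1\le\cdots\le u_k>u_{k+1}\ge\cdots\ge u_n$. $D^{(i)}(u)=\{n-i+j:1\le j\le i,\ u_j>u_{n-i+j}\}$ and $d_i(u)=\sum_{n-i+j\in D^{(i)}(u)}(u_j-u_{n-i+j})$. *)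

(* Defs.v *)
(* Words over P are seq nat with all letters positive. *)
From mathcomp Require Import all_boot.
Set Implicit Arguments. Unset Strict Implicit. Unset Printing Implicit Defensive.

Definition posword (w : seq nat) : bool := all (fun a => 0 < a) w.

Definition embeds_at (u w : seq nat) (p : nat) : bool :=
  (p + size u <= size w) &&
  all (fun j => nth 0 u j <= nth 0 w (p + j)) (iota 0 (size u)).

Definition embeds (u w : seq nat) : bool :=
  has (embeds_at u w) (iota 0 (size w).+1).

(* w in S(u): u <= w and the last |u| letters form the only embedding *)
Definition inS (u w : seq nat) : bool :=
  embeds u w && embeds_at u w (size w - size u) &&
  all (fun p => embeds_at u w p ==> (p == size w - size u)) (iota 0 (size w).+1).

(* w in S^(i)(u), with n = |u|, m = |w|: u embeds into the last n letters,
   and the leftmost embedding starts at 1-indexed position m-2n+i+1,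
   i.e. 0-indexed position m+i-2n (which must be >= 0). *)
Definition inSi (u : seq nat) (i : nat) (w : seq nat) : bool :=
  let n := size u in let m := size w in
  embeds_at u w (m - n) &&
  (2 * n <= m + i) && embeds_at u w (m + i - 2 * n) &&
  all (fun p => ~~ embeds_at u w p) (iota 0 (m + i - 2 * n)).

Definition incdec (u : seq nat) : bool :=
  sorted leq u ||
  has (fun k => sorted leq (take k u) && (nth 0 u k < nth 0 u k.-1)
                && sorted geq (drop k u))
      (iota 1 (size u).-1).

Definition d_ (i : nat) (u : seq nat) : nat :=
  let n := size u in
  \sum_(j < i) (if nth 0 u (n - i + j) < nth 0 u j
                then nth 0 u j - nth 0 u (n - i + j) else 0).

(* number of words over P of length m and letter-sum s satisfying P;
   such words have all letters <= s, so they are the tuples below. *)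
Definition cnt (P : seq nat -> bool) (m s : nat) : nat :=
  #|[set t : m.-tuple 'I_s.+1 |
      let w := map (@nat_of_ord _) (tval t) in
      posword w && (sumn w == s) && P w]|.

(* Main.v *)
Require Import Defs.
From mathcomp Require Import all_boot.
From mathcomp Require Import zify.
Set Implicit Arguments. Unset Strict Implicit. Unset Printing Implicit Defensive.

Fixpoint comps (m s : nat) : seq (seq nat) :=
  match m with
  | 0 => if s == 0 then [:: [::]] else [::]
  | m'.+1 => [seq a :: w | a <- iota 1 s, w <- comps m' (s - a)]
  end.

Lemma mem_comps m s w :
  (w \in comps m s) = [&& size w == m, posword w & sumn w == s].
Proof.
elim: m s w => [|m IH] s w /=.
  case: w => [|a w] /=; first by case: s.
  by case: (s == 0).
apply/allpairsPdep/idP.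
  move=> [a [x [ha hx ->]]]; rewrite mem_iota in ha; move: hx; rewrite IH => /and3P[/eqP hsz hp /eqP hs].
  rewrite /posword /= in hp *; rewrite hp hsz eqxx andbT /=.
  apply/andP; split; first lia. apply/eqP; lia.
case: w => [|a w] //= /and3P[hsz hp hs].
rewrite /posword /= in hp; case/andP: hp => ha hp.
exists a, w; split => //.
  rewrite mem_iota; lia.
rewrite IH; apply/and3P; split => //.
apply/eqP; lia.
Qed.

Lemma uniq_comps m s : uniq (comps m s).
Proof.
elim: m s => [|m IH] s /=; first by case: (s == 0).
apply: allpairs_uniq_dep => //; first exact: iota_uniq.
move=> [a x] [b y] _ _ /= [-> ->] //.
Qed.

Lemma mem_le_sumn (x : seq nat) a : a \in x -> a <= sumn x.
Proof.
elim: x => //= b x IH; rewrite inE => /orP[/eqP -> | /IH]; lia.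
Qed.

Lemma cnt_count P m s : cnt P m s = count P (comps m s).
Proof.
rewrite /cnt cardE -size_filter.
set A := [set _ | _].
set f := fun t : m.-tuple 'I_s.+1 => map (@nat_of_ord _) (tval t).
rewrite -(size_map f); apply: perm_size.
apply: uniq_perm.
- rewrite map_inj_uniq ?enum_uniq // => t1 t2 /(congr1 (map (@inord s))).
  rewrite -!map_comp (@eq_map _ _ (inord \o _) id); last by move=> i /=; rewrite inord_val.
  rewrite (@eq_map _ _ (inord \o _) id); last by move=> i /=; rewrite inord_val.
  by rewrite !map_id => /val_inj.
- exact/filter_uniq/uniq_comps.
move=> x; rewrite mem_filter mem_comps.
apply/mapP/idP.
  move=> [t]; rewrite mem_enum inE /f => /andP[/andP[hp hs] hP] ->.
  by rewrite hP hp hs size_map size_tuple eqxx.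
move=> /andP[hP /and3P[hsz hp hs]].
have hsz' : size (map (@inord s) x) == m by rewrite size_map.
exists (Tuple hsz'); last first.
  rewrite /f /= -map_comp -[LHS]map_id; apply/eq_in_map => a ha /=.
  rewrite inordK // ltnS; rewrite -(eqP hs); exact: mem_le_sumn.
rewrite mem_enum inE.
have -> : map (@nat_of_ord _) (tval (Tuple hsz')) = x.
  rewrite /= -map_comp -[RHS]map_id; apply/eq_in_map => a ha /=.
  rewrite inordK // ltnS; rewrite -(eqP hs); exact: mem_le_sumn.
by rewrite hp hs hP.
Qed.
Lemma tri_sum (F : nat -> nat -> nat) s :
  \sum_(1 <= a < s.+1) \sum_(0 <= t < (s - a).+1) F a (a + t) =
  \sum_(0 <= b < s.+1) \sum_(1 <= a < b.+1) F a b.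
Proof.
elim: s => [|s IH]; first by rewrite big_geq // big_nat1 big_geq.
rewrite [RHS]big_nat_recr //= -IH [LHS]big_nat_recr //= subnn big_nat1 addn0.
rewrite [in RHS](@big_nat_recr _ _ _ s.+1) //= addnA; congr (_ + _).
rewrite -big_split /=; apply: eq_big_nat => a /andP[ha1 ha2].
rewrite subSn; last by lia.
rewrite big_nat_recr //=; congr (_ + _); congr (F a _); lia.
Qed.

Lemma count_comps_S (P : pred (seq nat)) m s :
  count P (comps m.+1 s) = \sum_(1 <= a < s.+1) count (fun w => P (a :: w)) (comps m (s - a)).
Proof.
rewrite /= count_flatten sumnE big_map /index_iota subSS subn0.
rewrite big_map; by apply: eq_bigr => a _; rewrite count_map.
Qed.

Lemma count_split (Q R : pred (seq nat)) m1 m2 s :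
  count (fun w => Q (take m1 w) && R (drop m1 w)) (comps (m1 + m2) s) =
  \sum_(0 <= s1 < s.+1) count Q (comps m1 s1) * count R (comps m2 (s - s1)).
Proof.
elim: m1 Q s => [|m1 IH] Q s.
  rewrite add0n big_nat_recl //= subn0 big1 ?addn0; last first.
    by move=> i _.
  case hQ: (Q [::]) => /=; rewrite ?mul1n ?mul0n.
    by apply: eq_count => w; rewrite take0 drop0 hQ.
  by rewrite (@eq_count _ _ pred0) ?count_pred0 // => w; rewrite take0 hQ.
rewrite addSn count_comps_S.
rewrite (eq_bigr (fun a => \sum_(0 <= t < (s - a).+1)
    (count (fun x => Q (a :: x)) (comps m1 (a + t - a)) * count R (comps m2 (s - (a + t)))))); last first.
  move=> a _.
  rewrite (@eq_count _ _ (fun w => (fun x => Q (a :: x)) (take m1 w) && R (drop m1 w))) //.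
  rewrite (IH (fun x => Q (a :: x))); apply: eq_bigr => t _; by rewrite addKn subnDA.
rewrite (tri_sum (fun a b => count (fun x => Q (a :: x)) (comps m1 (b - a)) * count R (comps m2 (s - b)))).
apply: eq_bigr => b _; rewrite count_comps_S big_distrl /=.
by [].
Qed.
Lemma win_sum (F : nat -> nat) n e :
  \sum_(0 <= t < n) (if e <= t then F (t - e) else 0) = \sum_(0 <= j < n - e) F j.
Proof.
elim: n => [|n IH]; first by rewrite !big_geq.
rewrite big_nat_recr //= IH.
case: (leqP e n) => h.
  by rewrite subSn // big_nat_recr.
by rewrite addn0 (_ : n.+1 - e = n - e) //; lia.
Qed.

Lemma trunc_sum (F : nat -> nat) n M :
  \sum_(0 <= j < n) (if j < M then F j else 0) = \sum_(0 <= j < minn n M) F j.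
Proof.
elim: n => [|n IH]; first by rewrite min0n !big_geq.
rewrite big_nat_recr //= IH.
case: (ltnP n M) => h.
  by rewrite (minn_idPl h) big_nat_recr.
by rewrite (minn_idPr (leqW h)) addn0.
Qed.

Lemma conv1 (G : nat -> nat) c s : 0 < c ->
  \sum_(1 <= a < s.+1) (if c <= a then G (s - a) else 0) = \sum_(0 <= t < s.+1 - c) G t.
Proof.
move=> hc; elim: s G => [|s IH] G; first by rewrite big_geq // (_ : 1 - c = 0) ?big_geq //; lia.
rewrite big_nat_recr //= subnn.
rewrite (eq_big_nat _ _ (F2 := fun a => if c <= a then G (s - a).+1 else 0)); last first.
  by move=> a /andP[h1 h2]; rewrite subSn.
have /= -> := IH (fun x => G x.+1); case: (leqP c s.+1) => h.
  rewrite (_ : s.+2 - c = (s.+1 - c).+1); last by lia.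
  by rewrite big_nat_recl // addnC.
rewrite addn0 (_ : s.+1 - c = 0); last by lia.
by rewrite (_ : s.+2 - c = 0) ?big_geq //; lia.
Qed.

Lemma hockey N k : \sum_(0 <= j < N.+1) 'C(j + k, k) = 'C(N + k.+1, k.+1).
Proof.
elim: N => [|N IH]; first by rewrite big_nat1 add0n binn add0n binn.
rewrite big_nat_recr //= IH.
rewrite (_ : N.+1 + k.+1 = (N + k.+1).+1); last by lia.
rewrite binS addnC [in RHS]addnC; congr (_ + _); by rewrite addSnnS.
Qed.

Fixpoint ge_word (b v : seq nat) : bool :=
  match b, v with
  | [::], [::] => true
  | c :: b', a :: v' => (c <= a) && ge_word b' v'
  | _, _ => false
  end.

Lemma count_ge c b s : all (leq 1) (c :: b) ->
  count (ge_word (c :: b)) (comps (size b).+1 s) =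
  if c + sumn b <= s then 'C(s - (c + sumn b) + size b, size b) else 0.
Proof.
elim: b c s => [|c' b IH] c s /andP[hc hb].
  rewrite count_comps_S.
  rewrite (eq_big_nat _ _ (F2 := fun a => if c <= a then (fun t => if t == 0 then 1 else 0) (s - a) else 0)); last first.
    move=> a _ /=; case: (c <= a) => /=; last by rewrite count_pred0.
    by case: (s - a).
  have /= -> := conv1 (fun t => if t == 0 then 1 else 0) s hc; rewrite addn0 bin0.
  case: (leqP c s) => h.
    by rewrite (_ : s.+1 - c = (s - c).+1) ?big_nat_recl ?big1_seq //; lia.
  by rewrite (_ : s.+1 - c = 0) ?big_geq //; lia.
rewrite count_comps_S.
rewrite (eq_big_nat _ _ (F2 := fun a => if c <= a then
   (fun t => if c' + sumn b <= t then 'C(t - (c' + sumn b) + size b, size b) else 0) (s - a) else 0)); last first.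
  move=> a _ /=; rewrite -IH //.
  by case: (c <= a) => //=; rewrite (@eq_count _ _ pred0) ?count_pred0.
have /= -> := conv1 (fun t => if c' + sumn b <= t then 'C(t - (c' + sumn b) + size b, size b) else 0) s hc.
have /= -> := win_sum (fun j => 'C(j + size b, size b)) (s.+1 - c) (c' + sumn b).
case: (leqP (c + (c' + sumn b)) s) => h.
  by rewrite (_ : s.+1 - c - (c' + sumn b) = (s - (c + (c' + sumn b))).+1) ?hockey ?addnS //; lia.
by rewrite (_ : s.+1 - c - (c' + sumn b) = 0) ?big_geq //; lia.
Qed.

Lemma embeds_atP u w p : reflect
  (p + size u <= size w /\ forall j, j < size u -> nth 0 u j <= nth 0 w (p + j))
  (embeds_at u w p).
Proof.
rewrite /embeds_at; apply: (iffP andP) => [[h1 /allP h2]|[h1 h2]]; split => //.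
  by move=> j hj; apply: h2; rewrite mem_iota.
by apply/allP => j; rewrite mem_iota => /andP[_ hj]; apply: h2.
Qed.

Lemma ge_wordP b v : reflect
  (size v = size b /\ forall j, j < size b -> nth 0 b j <= nth 0 v j) (ge_word b v).
Proof.
elim: b v => [|c b IH] [|a v] /=.
- by apply: ReflectT.
- by apply: ReflectF => -[].
- by apply: ReflectF => -[].
apply: (iffP andP) => [[h1 /IH [h2 h3]]|[h1 h2]].
  split; first by rewrite h2.
  by case=> [|j] //= /h3.
split; first by apply: (h2 0).
by apply/IH; split; [case: h1 | move=> j hj; apply: (h2 j.+1)].
Qed.

Lemma novalley u x y z : incdec u -> x < y -> y < z -> z < size u ->
  nth 0 u x <= nth 0 u y \/ nth 0 u z <= nth 0 u y.
Proof.
move=> /orP[hs|/hasP[K hK /andP[/andP[h1 _] h2]]] hxy hyz hz.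
  left; apply: (sorted_leq_nth leq_trans leqnn) => //; rewrite ?inE; lia.
rewrite mem_iota in hK.
case: (ltnP y K) => hyK.
  left; rewrite -(nth_take 0 hyK) -(nth_take 0 (ltn_trans hxy hyK)).
  apply: (sorted_leq_nth leq_trans leqnn) => //; rewrite ?inE ?size_take; (try case: ifP => _); lia.
right.
have e1 : nth 0 u y = nth 0 (drop K u) (y - K) by rewrite nth_drop subnKC.
have e2 : nth 0 u z = nth 0 (drop K u) (z - K) by rewrite nth_drop subnKC //; lia.
rewrite e1 e2.
have := (@sorted_leq_nth _ geq (fun a b c h h' => leq_trans h' h) (fun a => leqnn a) 0 _ h2 (y - K) (z - K)).
apply; rewrite ?inE ?size_drop; lia.
Qed.

Definition ee (u : seq nat) i j := nth 0 u j - nth 0 u (size u - i + j).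
Definition epos u i N r := if N - i <= r then ee u i (r - (N - i)) else 0.
Definition raise u i (w : seq nat) := mkseq (fun r => nth 0 w r + epos u i (size w) r) (size w).
Definition lower u i (w : seq nat) := mkseq (fun r => nth 0 w r - epos u i (size w) r) (size w).
Definition Aw u i w := inS u w && embeds_at (take i u) w (size w - i).

Lemma inSP u w : reflect
  (embeds_at u w (size w - size u) /\ forall p, embeds_at u w p -> p = size w - size u)
  (inS u w).
Proof.
rewrite /inS; apply: (iffP andP) => [[/andP[_ h1] /allP h2]|[h1 h2]].
  split => // p hp; apply/eqP.
  have := h2 p; rewrite hp implyTb; apply.
  rewrite mem_iota; case/embeds_atP: hp; lia.
split; last first.
  by apply/allP => p _; apply/implyP => /h2 ->.
rewrite h1 andbT; apply/hasP; exists (size w - size u) => //.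
rewrite mem_iota; lia.
Qed.

Lemma size_raise u i w : size (raise u i w) = size w.
Proof. exact: size_mkseq. Qed.
Lemma size_lower u i w : size (lower u i w) = size w.
Proof. exact: size_mkseq. Qed.

Lemma nth_raise u i w r : r < size w -> nth 0 (raise u i w) r = nth 0 w r + epos u i (size w) r.
Proof. by move=> h; rewrite nth_mkseq. Qed.
Lemma nth_lower u i w r : r < size w -> nth 0 (lower u i w) r = nth 0 w r - epos u i (size w) r.
Proof. by move=> h; rewrite nth_mkseq. Qed.

Lemma sumn_mkseq f N : sumn (mkseq f N) = \sum_(0 <= r < N) f r.
Proof. by rewrite sumnE big_map /index_iota subn0. Qed.

Lemma sumn_nthE (w : seq nat) : sumn w = \sum_(0 <= r < size w) nth 0 w r.
Proof. by rewrite -sumn_mkseq mkseq_nth. Qed.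

Lemma sum_epos u i N : i <= N -> \sum_(0 <= r < N) epos u i N r = d_ i u.
Proof.
move=> hiN; rewrite /epos.
have /= -> := win_sum (ee u i) N (N - i).
rewrite (_ : N - (N - i) = i); last by lia.
rewrite big_mkord /d_; apply: eq_bigr => j _; rewrite /ee.
by case: ltnP => h //; apply/eqP; rewrite subn_eq0.
Qed.

Lemma sumn_raise u i w : i <= size w -> sumn (raise u i w) = sumn w + d_ i u.
Proof.
move=> h; rewrite sumn_mkseq big_split /= -sumn_nthE sum_epos //.
Qed.

Lemma poswordP (w : seq nat) : reflect (forall r, r < size w -> 0 < nth 0 w r) (posword w).
Proof. exact: all_nthP. Qed.

Lemma inS_size u w : inS u w -> size u <= size w.
Proof. by case/inSP => /embeds_atP[h _] _; lia. Qed.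

Lemma inS_end u w q : inS u w -> q < size u -> nth 0 u q <= nth 0 w (size w - size u + q).
Proof. by case/inSP => /embeds_atP[_ h] _ /h. Qed.

Lemma Aw_take u i w j : i < size u -> Aw u i w -> j < i -> nth 0 u j <= nth 0 w (size w - i + j).
Proof.
move=> hin /andP[_ /embeds_atP[_ h]] hj.
have := h j; rewrite size_take hin nth_take //; apply => //.
Qed.

Lemma A_bound u i w : 0 < i -> i < size u -> Aw u i w ->
  forall r, r < size w -> epos u i (size w) r <= nth 0 w r.
Proof.
move=> hi hin hA r hr; rewrite /epos; case: (leqP (size w - i) r) => h //.
have hS := inS_size (proj1 (andP hA)).
have hj : r - (size w - i) < i by lia.
have := Aw_take hin hA hj.
rewrite /ee (_ : size w - i + (r - (size w - i)) = r); last by lia.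
lia.
Qed.

Lemma raise_lower u i w : (forall r, r < size w -> epos u i (size w) r <= nth 0 w r) ->
  raise u i (lower u i w) = w.
Proof.
move=> h; apply: (@eq_from_nth nat 0); rewrite ?size_raise ?size_lower ?size_raise //.
move=> r hr; rewrite nth_raise ?size_lower // nth_lower //.
rewrite ?size_lower subnK //; exact: h.
Qed.

Lemma lower_raise u i w : lower u i (raise u i w) = w.
Proof.
apply: (@eq_from_nth nat 0); rewrite ?size_raise ?size_lower ?size_raise //.
move=> r hr; rewrite nth_lower ?size_raise // nth_raise //.
by rewrite ?size_raise addnK.
Qed.

Lemma Aw_lower_key u i w r : 0 < i -> i < size u -> Aw u i w -> r < size w ->
  size w - i <= r -> nth 0 u (r - (size w - size u)) <= nth 0 w r - epos u i (size w) r.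
Proof.
move=> hi hin hA hr h.
have hS := inS_size (proj1 (andP hA)).
have hj : r - (size w - i) < i by lia.
have hq : r - (size w - size u) < size u by lia.
have h1 := Aw_take hin hA hj.
have h2 := inS_end (proj1 (andP hA)) hq.
move: h1 h2; rewrite /epos h /ee.
rewrite (_ : size w - i + (r - (size w - i)) = r); last by lia.
rewrite (_ : size w - size u + (r - (size w - size u)) = r); last by lia.
rewrite (_ : size u - i + (r - (size w - i)) = r - (size w - size u)); last by lia.
lia.
Qed.

Lemma Aw_lower u i w : 0 < i -> i < size u -> Aw u i w -> inS u (lower u i w).
Proof.
move=> hi hin hA; have hS := proj1 (andP hA); have hN := inS_size hS.
apply/inSP; rewrite size_lower; split.
  apply/embeds_atP; rewrite size_lower; split; first lia.
  move=> q hq; rewrite nth_lower; last by lia.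
  case: (leqP (size w - i) (size w - size u + q)) => h.
    have := Aw_lower_key hi hin hA (_ : size w - size u + q < size w) h.
    by rewrite addKn; apply; lia.
  by rewrite /epos (leqNgt (size w - i)) h subn0; apply: inS_end.
move=> p /embeds_atP[h1 h2]; case/inSP: hS => _; apply.
apply/embeds_atP; rewrite size_lower in h1; split => // j hj.
apply: (leq_trans (h2 j hj)); rewrite nth_lower; last by lia.
exact: leq_subr.
Qed.

Lemma raise_Aw u i w : 0 < i -> i < size u -> incdec u -> inS u w -> Aw u i (raise u i w).
Proof.
move=> hi hin hid hS; have hN := inS_size hS.
apply/andP; split; last first.
  apply/embeds_atP; rewrite size_raise size_take hin; split; first lia.
  move=> j hj; rewrite nth_take // nth_raise; last by lia.
  rewrite /epos (_ : size w - i <= size w - i + j) ?leq_addr //.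
  rewrite /ee (_ : size w - i + j - (size w - i) = j); last by lia.
  have := inS_end hS (_ : size u - i + j < size u).
  rewrite (_ : size w - size u + (size u - i + j) = size w - i + j); last by lia.
  move=> h; have := h ltac:(lia); lia.
apply/inSP; rewrite size_raise; split.
  apply/embeds_atP; rewrite size_raise; split; first lia.
  move=> q hq; rewrite nth_raise; last by lia.
  apply: leq_trans (leq_addr _ _); exact: inS_end.
move=> p hp; case: (eqVneq p (size w - size u)) => // hne.
case/inSP: (hS) => hend; apply.
case/embeds_atP: hp; rewrite size_raise => h1 h2.
apply/embeds_atP; split => // j0 hj0.
have := h2 j0 hj0; rewrite nth_raise; last by lia.
rewrite /epos; case: (leqP (size w - i) (p + j0)) => hr; last by rewrite addn0.
set x := p + j0 - (size w - i).
have hxy : x < x + (size u - i) by lia.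
have hyz : x + (size u - i) < j0 by lia.
have := novalley hid hxy hyz hj0.
have hq : x + (size u - i) < size u by lia.
have := inS_end hS hq.
rewrite (_ : size w - size u + (x + (size u - i)) = p + j0); last by lia.
rewrite /ee (addnC (size u - i)).
lia.
Qed.

Lemma posword_lower u i w : 0 < i -> i < size u -> posword u -> posword w -> Aw u i w ->
  posword (lower u i w).
Proof.
move=> hi hin /poswordP hu /poswordP hw hA; apply/poswordP => r; rewrite size_lower => hr.
have hN := inS_size (proj1 (andP hA)).
case: (leqP (size w - i) r) => h.
  rewrite nth_lower //; apply: (leq_trans _ (Aw_lower_key hi hin hA hr h)); apply: hu; lia.
by rewrite nth_lower // /epos (leqNgt (size w - i)) h subn0; apply: hw.
Qed.

Lemma posword_raise u i w : posword w -> posword (raise u i w).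
Proof.
move=> /poswordP hw; apply/poswordP => r; rewrite size_raise => hr.
by rewrite nth_raise //; apply: leq_trans (leq_addr _ _); apply: hw.
Qed.

Lemma sumn_lower u i w : 0 < i -> i < size u -> Aw u i w ->
  sumn w = sumn (lower u i w) + d_ i u.
Proof.
move=> hi hin hA; have hN := inS_size (proj1 (andP hA)).
rewrite -sumn_raise ?size_lower; last by lia.
by rewrite raise_lower //; apply: A_bound.
Qed.

Lemma count_A u i N s1 : 0 < i -> i < size u -> incdec u -> posword u ->
  count (Aw u i) (comps N s1) =
  if d_ i u <= s1 then count (inS u) (comps N (s1 - d_ i u)) else 0.
Proof.
move=> hi hin hid hu.
case: leqP => hd; last first.
  rewrite (@eq_in_count _ _ pred0) ?count_pred0 // => x.
  rewrite mem_comps => /and3P[_ _ /eqP hs] /=; apply/negbTE/negP => hA.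
  have := sumn_lower hi hin hA; lia.
rewrite -!size_filter -(size_map (lower u i)); apply: perm_size.
apply: uniq_perm.
- rewrite map_inj_in_uniq ?filter_uniq ?uniq_comps //.
  move=> x y; rewrite !mem_filter => /andP[hx _] /andP[hy _] e.
  by rewrite -(raise_lower (A_bound hi hin hx)) e raise_lower //; apply: A_bound.
- by rewrite filter_uniq ?uniq_comps.
move=> y; apply/mapP/idP.
  move=> [x]; rewrite mem_filter mem_comps => /andP[hA /and3P[hsz hp /eqP hs]] ->.
  rewrite mem_filter mem_comps Aw_lower // size_lower hsz posword_lower //=.
  by have := sumn_lower hi hin hA; rewrite hs => ->; rewrite addnK.
rewrite mem_filter mem_comps => /andP[hS /and3P[hsz hp /eqP hs]].
exists (raise u i y); last by rewrite lower_raise.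
rewrite mem_filter mem_comps raise_Aw // size_raise hsz posword_raise //=.
have hN := inS_size hS.
rewrite sumn_raise; last by lia.
by rewrite hs subnK.
Qed.

Lemma embeds_at_take u (w : seq nat) M p : M <= size w -> p + size u <= M ->
  embeds_at u (take M w) p = embeds_at u w p.
Proof.
move=> hM hp; apply/embeds_atP/embeds_atP => [[h1 h2]|[h1 h2]]; split; rewrite ?size_take_min; try lia.
  by move=> j hj; rewrite -(nth_take _ (_ : p + j < M)) ?h2 //; lia.
by move=> j hj; rewrite nth_take ?h2 //; lia.
Qed.

Lemma inS_alt u x : inS u x =
  embeds_at u x (size x - size u) && all (fun p => ~~ embeds_at u x p) (iota 0 (size x - size u)).
Proof.
apply/inSP/andP => [[h1 h2]|[h1 /allP h2]]; split => //.
  apply/allP => p; rewrite mem_iota => hp; apply/negP => /h2; lia.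
move=> p hp; have := h2 p; rewrite mem_iota hp /=.
case/embeds_atP: hp => hp _ h; apply/eqP; rewrite eqn_leq; apply/andP; split; first lia.
by rewrite leqNgt; apply/negP => hlt; have := h ltac:(lia).
Qed.

Lemma embeds_split u i (w : seq nat) m' : i <= m' -> i < size u -> size w = m' + (size u - i) ->
  embeds_at u w (m' - i) = embeds_at (take i u) (take m' w) (m' - i) && ge_word (drop i u) (drop m' w).
Proof.
move=> him hin hw; apply/embeds_atP/andP => [[h1 h2]|[/embeds_atP[h1 h2] /ge_wordP[h3 h4]]].
  split.
    apply/embeds_atP; rewrite size_take_min size_take_min; split; first lia.
    move=> j hj; rewrite nth_take; last by lia.
    rewrite nth_take; last by lia.
    apply: h2; lia.
  apply/ge_wordP; rewrite !size_drop hw; split; first lia.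
  move=> j hj; rewrite !nth_drop.
  rewrite (_ : m' + j = m' - i + (i + j)); last by lia.
  apply: h2; lia.
split; first lia.
move=> j hj; case: (ltnP j i) => hji.
  have := h2 j; rewrite size_take_min nth_take // nth_take; last by lia.
  apply; lia.
have := h4 (j - i); rewrite !nth_drop size_drop.
rewrite (_ : i + (j - i) = j); last by lia.
rewrite (_ : m' + (j - i) = m' - i + j); last by lia.
apply; lia.
Qed.

Lemma inSi_split u i (w : seq nat) m' : 0 < i -> i < size u -> size u <= m' ->
  size w = m' + (size u - i) ->
  inSi u i w = Aw u i (take m' w) && ge_word (drop i u) (drop m' w).
Proof.
move=> hi hin hn hw.
have hst : size (take m' w) = m' by rewrite size_take_min; lia.
rewrite /inSi /Aw inS_alt hst.
rewrite (_ : size w - size u = m' - i); last by lia.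
rewrite (_ : size w + i - 2 * size u = m' - size u); last by lia.
rewrite (_ : 2 * size u <= size w + i); last by apply/idP; lia.
rewrite embeds_split //; last by lia.
rewrite (@embeds_at_take u w m' (m' - size u)); [|lia|lia].
rewrite (@eq_in_all _ (fun p => ~~ embeds_at u (take m' w) p) (fun p => ~~ embeds_at u w p)); last first.
  move=> p; rewrite mem_iota => hp /=; rewrite embeds_at_take //; lia.
rewrite andbT.
set A := embeds_at (take i u) _ _; set B := ge_word _ _; set E := embeds_at u w _; set L := all _ _.
by case: A; case: B; case: E; case: L.
Qed.

Lemma final_sum (F C : nat -> nat) d e s :
 \sum_(0 <= s1 < s.+1) (if d <= s1 then F (s1 - d) else 0) * (if e <= s - s1 then C (s - s1 - e) else 0)
 = \sum_(0 <= j < s.+1) (if d + e + j <= s then F (s - (d + e) - j) * C j else 0).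
Proof.
set G := fun j => if d <= s - (j + e) then F (s - (j + e) - d) * C j else 0.
rewrite big_nat_rev /=.
rewrite (eq_big_nat _ _ (F2 := fun t => if e <= t then G (t - e) else 0)); last first.
  move=> t /andP[_ ht]; rewrite add0n subSS subKn; last by lia.
  rewrite /G; case: (leqP e t) => het; last by rewrite muln0.
  rewrite subnK //; case: (leqP d (s - t)) => //.
have /= -> := win_sum G s.+1 e.
have e1 : s.+1 - e = minn s.+1 (s.+1 - e) by rewrite (minn_idPr (leq_subr _ _)).
rewrite [in LHS]e1 -(trunc_sum G).
apply: eq_big_nat => j _; rewrite /G; case: (ltnP j (s.+1 - e)) => hj.
  case: (leqP d (s - (j + e))) => h1; case: (leqP (d + e + j) s) => h2; try lia.
  congr (F _ * _); lia.
case: (leqP (d + e + j) s) => h2 //; lia.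
Qed.

Theorem lemma2 (u : seq nat) (i : nat) :
  posword u -> incdec u -> 1 <= i -> i <= size u - 1 ->
  forall m s : nat,
    cnt (inSi u i) m s =
    \sum_(j < s.+1)
      (if (size u - i <= m) && (d_ i u + sumn (drop i u) + j <= s)
       then cnt (inS u) (m - (size u - i)) (s - (d_ i u + sumn (drop i u)) - j)
            * 'C(j + (size u - i) - 1, (size u - i) - 1)
       else 0).
Proof.
move=> hu hid hi hin' m s.
have hin : i < size u by lia.
rewrite cnt_count -(big_mkord xpredT (fun j : nat =>
      (if (size u - i <= m) && (d_ i u + sumn (drop i u) + j <= s)
       then cnt (inS u) (m - (size u - i)) (s - (d_ i u + sumn (drop i u)) - j)
            * 'C(j + (size u - i) - 1, (size u - i) - 1)
       else 0))).
case: (ltnP m (size u + (size u - i))) => hm.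
  rewrite (@eq_in_count _ _ pred0) ?count_pred0; last first.
    move=> w; rewrite mem_comps => /andP[/eqP hw _] /=.
    rewrite /inSi /= hw; apply/negbTE/negP => /andP[/andP[/andP[_ h] _] _]; lia.
  rewrite big1 // => j _; case: ifP => // _.
  rewrite cnt_count (@eq_in_count _ _ pred0) ?count_pred0 // => x.
  rewrite mem_comps => /andP[/eqP hx _] /=; apply/negbTE/negP => /inS_size; rewrite hx; lia.
set m' := m - (size u - i).
have hm' : m = m' + (size u - i) by rewrite /m' subnK //; lia.
rewrite (@eq_in_count _ (inSi u i) (fun w => Aw u i (take m' w) && ge_word (drop i u) (drop m' w))); last first.
  move=> w; rewrite mem_comps => /andP[/eqP hw _]; apply: inSi_split => //; last by rewrite hw.
  rewrite /m'; lia.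
have -> : comps m s = comps (m' + (size u - i)) s by rewrite -hm'.
rewrite count_split.
have hall : all (leq 1) (drop i u).
  by apply/allP => x /mem_drop; move/allP: hu; apply.
have hsd : size (drop i u) = size u - i by rewrite size_drop.
move: hall hsd; case hdu: (drop i u) => [|c b] hall hsd; first by simpl in hsd; lia.
simpl in hsd; rewrite -hsd.
under eq_big_nat => s1 _ do rewrite count_ge // count_A // -?hsd.
have /= -> := final_sum (fun t => count (inS u) (comps m' t)) (fun j => 'C(j + size b, size b)) (d_ i u) (c + sumn b) s.
apply: eq_big_nat => j _.
rewrite (_ : size b < m = true); last by apply/idP; lia.
by rewrite /= cnt_count addnS !subn1 /=.
Qed.
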